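(* Let $\mathbb T=\mathbb R/\mathbb Z$ be the circle group and $g_1,g_2\in\mathbb T$. Then $g_1$ and $g_2$ are induced conjugated if and only if either (i) $g_1$ and $g_2$ both have finite order and their orders are equal, or (ii) $g_1=\pm g_2$.
   Context: Elements $g_1,g_2$ of a topological group $G$ are induced conjugated if there exist a topological group $H$ containing $G$ as a topological subgroup and $t\in H$ with $tg_1t^{-1}=g_2$. *)

(* Defs.v *)
From Stdlib Require Import Reals.
Open Scope R_scope.

Record TopGroup := {
  tg_car :> Type;
  tg_mul : tg_car -> tg_car -> tg_car;
  tg_one : tg_car;
  tg_inv : tg_car -> tg_car;
  tg_assoc : forall x y z, tg_mul x (tg_mul y z) = tg_mul (tg_mul x y) z;
  tg_mul1l : forall x, tg_mul tg_one x = x;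
  tg_mul1r : forall x, tg_mul x tg_one = x;
  tg_mulVl : forall x, tg_mul (tg_inv x) x = tg_one;
  tg_mulVr : forall x, tg_mul x (tg_inv x) = tg_one;
  tg_open : (tg_car -> Prop) -> Prop;
  tg_open_full : tg_open (fun _ => True);
  tg_open_inter : forall U V, tg_open U -> tg_open V ->
      tg_open (fun x => U x /\ V x);
  tg_open_union : forall F : (tg_car -> Prop) -> Prop,
      (forall U, F U -> tg_open U) -> tg_open (fun x => exists U, F U /\ U x);
  tg_mul_cont : forall W x y, tg_open W -> W (tg_mul x y) ->
      exists U V, tg_open U /\ tg_open V /\ U x /\ V y /\
        (forall a b, U a -> V b -> W (tg_mul a b));
  tg_inv_cont : forall W, tg_open W -> tg_open (fun x => W (tg_inv x))
}.

(* A group G (given by its operation and its family of open sets) is a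
   topological subgroup of H via i : i is an injective homomorphism which is a
   homeomorphism onto its image (with the subspace topology). *)
Definition top_embedding {G : Type} (Gmul : G -> G -> G)
    (Gopen : (G -> Prop) -> Prop) (H : TopGroup) (i : G -> H) : Prop :=
  (forall x y, i (Gmul x y) = tg_mul H (i x) (i y)) /\
  (forall x y, i x = i y -> x = y) /\
  (forall V, tg_open H V -> Gopen (fun x => V (i x))) /\
  (forall U, Gopen U -> exists V, tg_open H V /\ forall x, U x <-> V (i x)).

Definition induced_conjugated {G : Type} (Gmul : G -> G -> G)
    (Gopen : (G -> Prop) -> Prop) (g1 g2 : G) : Prop :=
  exists (H : TopGroup) (i : G -> H), top_embedding Gmul Gopen H i /\
    exists t : H, tg_mul H (tg_mul H t (i g1)) (tg_inv H t) = i g2.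

(* Elements represented by their unique representative in [0,1). *)
Definition circle := { x : R | 0 <= x < 1 }.

Lemma frac_part_range (r : R) : 0 <= frac_part r < 1.
Proof. destruct (base_fp r) as [H1 H2]. split; [apply Rge_le; exact H1 | exact H2]. Qed.

Definition circle_proj (r : R) : circle :=
  exist _ (frac_part r) (frac_part_range r).

Definition circle_add (x y : circle) : circle := circle_proj (proj1_sig x + proj1_sig y).
Definition circle_zero : circle := circle_proj 0.
Definition circle_opp (x : circle) : circle := circle_proj (- proj1_sig x).

Definition circle_open (U : circle -> Prop) : Prop :=
  open_set (fun r : R => U (circle_proj r)).

Fixpoint circle_nmul (n : nat) (x : circle) : circle :=
  match n with
  | O => circle_zero
  | S m => circle_add x (circle_nmul m x)
  end.

Definition circle_order (x : circle) (n : nat) : Prop :=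
  (0 < n)%nat /\ circle_nmul n x = circle_zero /\
  (forall m, (0 < m < n)%nat -> circle_nmul m x <> circle_zero).

(* Main.v *)
Require Import Defs.
From Stdlib Require Import Reals Lra Lia ZArith Znumtheory List Classical ProofIrrelevance FunctionalExtensionality PropExtensionality.
Open Scope R_scope.

Definition zeq (x y : R) := exists z : Z, x - y = IZR z.

Lemma zeq_refl x : zeq x x.
Proof. exists 0%Z; simpl; ring. Qed.
Lemma zeq_sym x y : zeq x y -> zeq y x.
Proof. intros [z H]; exists (- z)%Z; rewrite opp_IZR; lra. Qed.
Lemma zeq_trans x y w : zeq x y -> zeq y w -> zeq x w.
Proof. intros [z H] [z' H']; exists (z + z')%Z; rewrite plus_IZR; lra. Qed.
Lemma zeq_add x y x' y' : zeq x x' -> zeq y y' -> zeq (x + y) (x' + y').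
Proof. intros [z H] [z' H']; exists (z + z')%Z; rewrite plus_IZR; lra. Qed.
Lemma zeq_opp x y : zeq x y -> zeq (- x) (- y).
Proof. intros [z H]; exists (- z)%Z; rewrite opp_IZR; lra. Qed.
Lemma zeq_mulZ (m : Z) x y : zeq x y -> zeq (IZR m * x) (IZR m * y).
Proof. intros [z H]; exists (m * z)%Z; rewrite mult_IZR; rewrite <- H; ring. Qed.
Lemma zeq_int x (z : Z) : zeq (x + IZR z) x.
Proof. exists z; ring. Qed.

Lemma Int_part_unique r z : IZR z <= r < IZR z + 1 -> Int_part r = z.
Proof.
  intros [H1 H2]. unfold Int_part.
  assert (E : (z + 1)%Z = up r).
  { apply tech_up; rewrite plus_IZR; simpl; lra. }
  lia.
Qed.

Lemma frac_zeq r : zeq (frac_part r) r.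
Proof. unfold frac_part. exists (- Int_part r)%Z. rewrite opp_IZR; ring. Qed.

Lemma frac_of_zeq x y : zeq x y -> frac_part x = frac_part y.
Proof.
  intros [z H]. unfold frac_part.
  assert (E : Int_part x = (Int_part y + z)%Z).
  { apply Int_part_unique. destruct (base_Int_part y). rewrite plus_IZR. lra. }
  rewrite E, plus_IZR. lra.
Qed.

Lemma circle_eq (c d : circle) : proj1_sig c = proj1_sig d -> c = d.
Proof.
  destruct c as [x Hx], d as [y Hy]; simpl; intros ->. f_equal. apply proof_irrelevance.
Qed.

Lemma val_proj r : zeq (proj1_sig (circle_proj r)) r.
Proof. simpl. apply frac_zeq. Qed.

Lemma proj_val c : circle_proj (proj1_sig c) = c.
Proof.
  apply circle_eq. destruct c as [x Hx]; simpl. unfold frac_part.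
  rewrite (Int_part_unique x 0); simpl; lra.
Qed.

Lemma proj_surj c : exists r, c = circle_proj r.
Proof. exists (proj1_sig c). symmetry; apply proj_val. Qed.

Lemma proj_eq x y : circle_proj x = circle_proj y <-> zeq x y.
Proof.
  split.
  - intros H. apply (f_equal (@proj1_sig _ _)) in H.
    apply zeq_trans with (proj1_sig (circle_proj x)). apply zeq_sym, val_proj.
    rewrite H. apply val_proj.
  - intros H. apply circle_eq. simpl. apply frac_of_zeq. exact H.
Qed.

Lemma add_proj x y : circle_add (circle_proj x) (circle_proj y) = circle_proj (x + y).
Proof. unfold circle_add. apply proj_eq. apply zeq_add; apply val_proj. Qed.
Lemma opp_proj x : circle_opp (circle_proj x) = circle_proj (- x).
Proof. unfold circle_opp. apply proj_eq. apply zeq_opp; apply val_proj. Qed.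
Lemma nmul_proj n x : circle_nmul n (circle_proj x) = circle_proj (INR n * x).
Proof.
  induction n; simpl circle_nmul.
  - unfold circle_zero. apply proj_eq. simpl. exists 0%Z. simpl; ring.
  - rewrite IHn, add_proj. rewrite S_INR. apply proj_eq. exists 0%Z; simpl; ring.
Qed.

Ltac csurj := repeat match goal with
  | c : circle |- _ => let r := fresh "r" in destruct (proj_surj c) as [r ->]; clear c
  end.

Lemma cadd_comm x y : circle_add x y = circle_add y x.
Proof. csurj. rewrite !add_proj. f_equal; ring. Qed.
Lemma cadd_assoc x y w : circle_add x (circle_add y w) = circle_add (circle_add x y) w.
Proof. csurj. rewrite !add_proj. f_equal; ring. Qed.
Lemma cadd_0_l x : circle_add circle_zero x = x.
Proof. csurj. unfold circle_zero. rewrite add_proj. f_equal; ring. Qed.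
Lemma cadd_0_r x : circle_add x circle_zero = x.
Proof. rewrite cadd_comm; apply cadd_0_l. Qed.
Lemma cadd_opp_r x : circle_add x (circle_opp x) = circle_zero.
Proof. csurj. unfold circle_zero. rewrite opp_proj, add_proj. f_equal; ring. Qed.
Lemma cadd_opp_l x : circle_add (circle_opp x) x = circle_zero.
Proof. rewrite cadd_comm; apply cadd_opp_r. Qed.
Lemma copp_0 : circle_opp circle_zero = circle_zero.
Proof. unfold circle_zero. rewrite opp_proj. f_equal; ring. Qed.
Lemma copp_add x y : circle_opp (circle_add x y) = circle_add (circle_opp x) (circle_opp y).
Proof. csurj. rewrite !add_proj, !opp_proj, add_proj. f_equal; ring. Qed.
Lemma nmul_add n x y : circle_nmul n (circle_add x y) = circle_add (circle_nmul n x) (circle_nmul n y).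
Proof. csurj. rewrite add_proj, !nmul_proj, add_proj. f_equal; ring. Qed.

Definition near (r e : R) := exists z : Z, Rabs (r - IZR z) < e.

Lemma near_zeq r s e : zeq r s -> near r e -> near s e.
Proof. intros [z H] [w Hw]. exists (w - z)%Z. rewrite minus_IZR.
  replace (s - (IZR w - IZR z)) with (r - IZR w) by lra. exact Hw. Qed.
Lemma near_add r s e1 e2 : near r e1 -> near s e2 -> near (r + s) (e1 + e2).
Proof. intros [z H] [w Hw]. exists (z + w)%Z. rewrite plus_IZR.
  replace (r + s - (IZR z + IZR w)) with ((r - IZR z) + (s - IZR w)) by ring.
  eapply Rle_lt_trans. apply Rabs_triang. lra. Qed.
Lemma near_opp r e : near r e -> near (- r) e.
Proof. intros [z H]. exists (- z)%Z. rewrite opp_IZR.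
  replace (- r - - IZR z) with (- (r - IZR z)) by ring. rewrite Rabs_Ropp. exact H. Qed.
Lemma near_mono r e e' : e <= e' -> near r e -> near r e'.
Proof. intros He [z H]; exists z; lra. Qed.
Lemma near_0 e : 0 < e -> near 0 e.
Proof. intros He; exists 0%Z. simpl. rewrite Rminus_0_r, Rabs_R0. exact He. Qed.
Lemma near_nat (k : nat) r e : 0 < e -> near r e -> near (INR k * r) ((INR k + 1) * e).
Proof.
  intros He [z H]. exists (Z.of_nat k * z)%Z. rewrite mult_IZR, <- INR_IZR_INZ.
  replace (INR k * r - INR k * IZR z) with (INR k * (r - IZR z)) by ring.
  rewrite Rabs_mult, (Rabs_pos_eq (INR k)) by apply pos_INR.
  pose proof (pos_INR k). nra.
Qed.

Definition cnear (x y : circle) e := near (proj1_sig x - proj1_sig y) e.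

Lemma cnear_refl x e : 0 < e -> cnear x x e.
Proof. intros; unfold cnear; rewrite Rminus_diag; apply near_0; auto. Qed.
Lemma cnear_add x' x y' y e1 e2 : cnear x' x e1 -> cnear y' y e2 ->
  cnear (circle_add x' y') (circle_add x y) (e1 + e2).
Proof.
  unfold cnear, circle_add. intros H1 H2.
  eapply near_zeq; [| apply (near_add _ _ _ _ H1 H2)].
  apply zeq_sym. apply zeq_trans with ((proj1_sig x' + proj1_sig y') - (proj1_sig x + proj1_sig y)).
  - apply zeq_add; [apply val_proj| apply zeq_opp, val_proj].
  - exists 0%Z; simpl; ring.
Qed.
Lemma cnear_opp x' x e : cnear x' x e -> cnear (circle_opp x') (circle_opp x) e.
Proof.
  unfold cnear, circle_opp. intros H1.
  eapply near_zeq; [| apply (near_opp _ _ H1)].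
  apply zeq_sym. apply zeq_trans with ((- proj1_sig x') - (- proj1_sig x)).
  - apply zeq_add; [apply val_proj| apply zeq_opp, val_proj].
  - exists 0%Z; simpl; ring.
Qed.
Lemma cnear_trans x y w e1 e2 : cnear x y e1 -> cnear y w e2 -> cnear x w (e1 + e2).
Proof. unfold cnear; intros H1 H2.
  replace (proj1_sig x - proj1_sig w) with ((proj1_sig x - proj1_sig y) + (proj1_sig y - proj1_sig w)) by ring.
  apply near_add; auto. Qed.
Lemma cnear_mono x y e e' : e <= e' -> cnear x y e -> cnear x y e'.
Proof. unfold cnear; apply near_mono. Qed.

Lemma circle_open_iff U : circle_open U <->
  forall r, U (circle_proj r) -> exists d, d > 0 /\ forall s, Rabs (s - r) < d -> U (circle_proj s).
Proof.
  unfold circle_open, open_set, neighbourhood, included, disc. split.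
  - intros H r Hr. destruct (H r Hr) as [[d Hd] Hd']. exists d; split; auto.
  - intros H r Hr. destruct (H r Hr) as [d [Hd Hd']]. exists (mkposreal d Hd). simpl. auto.
Qed.

Lemma copen_near U : circle_open U -> forall r, U (circle_proj r) ->
  exists d, d > 0 /\ forall s, near (s - r) d -> U (circle_proj s).
Proof.
  intros HU r Hr. rewrite circle_open_iff in HU. destruct (HU r Hr) as [d [Hd H]].
  exists d; split; auto. intros s [z Hz].
  replace (circle_proj s) with (circle_proj (s - IZR z)).
  - apply H. replace (s - IZR z - r) with (s - r - IZR z) by ring. auto.
  - apply proj_eq. exists (- z)%Z. rewrite opp_IZR; ring.
Qed.

Definition Hc : Type := ((Z -> circle) * Z)%type.
Definition Hmul (h1 h2 : Hc) : Hc :=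
  (fun j => circle_add (fst h1 j) (fst h2 (j + snd h1)%Z), (snd h1 + snd h2)%Z).
Definition Hone : Hc := (fun _ => circle_zero, 0%Z).
Definition Hinv (h : Hc) : Hc := (fun j => circle_opp (fst h (j - snd h)%Z), (- snd h)%Z).
Definition Hopen (V : Hc -> Prop) : Prop :=
  forall h, V h -> exists (J : list Z) (e : R), e > 0 /\
    forall h', snd h' = snd h -> (forall j, In j J -> cnear (fst h' j) (fst h j) e) -> V h'.

Lemma Hassoc x y z : Hmul x (Hmul y z) = Hmul (Hmul x y) z.
Proof.
  destruct x as [f a], y as [g b], z as [k c]; unfold Hmul; simpl. f_equal.
  - apply functional_extensionality; intro j. rewrite cadd_assoc.
    replace (j + (a + b))%Z with (j + a + b)%Z by ring. reflexivity.
  - ring.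
Qed.
Lemma Hmul1l x : Hmul Hone x = x.
Proof.
  destruct x as [f a]; unfold Hmul, Hone; simpl. f_equal.
  apply functional_extensionality; intro j. rewrite cadd_0_l. f_equal; ring.
Qed.
Lemma Hmul1r x : Hmul x Hone = x.
Proof.
  destruct x as [f a]; unfold Hmul, Hone; simpl. f_equal.
  - apply functional_extensionality; intro j. apply cadd_0_r.
  - ring.
Qed.
Lemma HmulVl x : Hmul (Hinv x) x = Hone.
Proof.
  destruct x as [f a]; unfold Hmul, Hone, Hinv; simpl. f_equal.
  - apply functional_extensionality; intro j.
    replace (j + - a)%Z with (j - a)%Z by ring. apply cadd_opp_l.
  - ring.
Qed.
Lemma HmulVr x : Hmul x (Hinv x) = Hone.
Proof.
  destruct x as [f a]; unfold Hmul, Hone, Hinv; simpl. f_equal.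
  - apply functional_extensionality; intro j.
    replace (j + a - a)%Z with j by ring. apply cadd_opp_r.
  - ring.
Qed.

Lemma Hopen_full : Hopen (fun _ => True).
Proof. intros h _. exists nil, 1. split; [lra| auto]. Qed.

Lemma Hopen_inter U V : Hopen U -> Hopen V -> Hopen (fun x => U x /\ V x).
Proof.
  intros HU HV h [Uh Vh]. destruct (HU h Uh) as [J1 [e1 [He1 H1]]].
  destruct (HV h Vh) as [J2 [e2 [He2 H2]]].
  exists (J1 ++ J2), (Rmin e1 e2). split. apply Rmin_pos; auto.
  intros h' Hs Hn. split.
  - apply H1; auto. intros j Hj. eapply cnear_mono; [apply Rmin_l|]. apply Hn, in_or_app; auto.
  - apply H2; auto. intros j Hj. eapply cnear_mono; [apply Rmin_r|]. apply Hn, in_or_app; auto.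
Qed.

Lemma Hopen_union (F : (Hc -> Prop) -> Prop) :
  (forall U, F U -> Hopen U) -> Hopen (fun x => exists U, F U /\ U x).
Proof.
  intros HF h [U [FU Uh]]. destruct (HF U FU h Uh) as [J [e [He H]]].
  exists J, e. split; auto. intros h' Hs Hn. exists U. split; auto.
Qed.

Lemma Hmul_cont : forall W x y, Hopen W -> W (Hmul x y) ->
  exists U V, Hopen U /\ Hopen V /\ U x /\ V y /\
    (forall a b, U a -> V b -> W (Hmul a b)).
Proof.
  intros W [f a] [g b] HW Wxy. destruct (HW _ Wxy) as [J [e [He H]]].
  exists (fun h' : Hc => snd h' = a /\ exists eta, 0 < eta < e / 2 /\
             forall j, In j J -> cnear (fst h' j) (f j) eta).
  exists (fun h' : Hc => snd h' = b /\ exists eta, 0 < eta < e / 2 /\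
             forall j, In j J -> cnear (fst h' (j + a)%Z) (g (j + a)%Z) eta).
  split; [| split; [| split; [| split]]].
  - intros h' [Hs [eta [Heta Hn]]]. exists J, ((e / 2 - eta) / 2). split; [lra|].
    intros h'' Hs' Hn'. split; [congruence|]. exists ((e / 2 - eta) / 2 + eta). split; [lra|].
    intros j Hj. eapply cnear_trans; [apply Hn'|apply Hn]; auto.
  - intros h' [Hs [eta [Heta Hn]]]. exists (map (fun j => (j + a)%Z) J), ((e / 2 - eta) / 2).
    split; [lra|].
    intros h'' Hs' Hn'. split; [congruence|]. exists ((e / 2 - eta) / 2 + eta). split; [lra|].
    intros j Hj. eapply cnear_trans; [apply Hn'|apply Hn]; auto.
    apply in_map_iff. exists j; auto.
  - split; auto. exists (e / 4). split; [lra|]. intros; apply cnear_refl; lra.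
  - split; auto. exists (e / 4). split; [lra|]. intros; apply cnear_refl; lra.
  - intros [f' a'] [g' b'] [Ha [eta1 [He1 H1]]] [Hb [eta2 [He2 H2]]]. simpl in *. subst a' b'.
    apply H. reflexivity. intros j Hj. unfold Hmul; simpl.
    eapply cnear_mono; [| apply cnear_add; [apply (H1 j Hj) | apply (H2 j Hj)]]. lra.
Qed.

Lemma Hinv_cont : forall W, Hopen W -> Hopen (fun x => W (Hinv x)).
Proof.
  intros W HW [f a] Wx. destruct (HW _ Wx) as [J [e [He H]]].
  exists (map (fun j => (j - a)%Z) J), e. split; auto.
  intros [f' a'] Hs Hn. simpl in Hs; subst a'. apply H. reflexivity.
  intros j Hj. unfold Hinv; simpl. apply cnear_opp. apply Hn. apply in_map_iff. exists j; auto.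
Qed.

Definition HG : TopGroup := {|
  tg_car := Hc; tg_mul := Hmul; tg_one := Hone; tg_inv := Hinv;
  tg_assoc := Hassoc; tg_mul1l := Hmul1l; tg_mul1r := Hmul1r;
  tg_mulVl := HmulVl; tg_mulVr := HmulVr;
  tg_open := Hopen; tg_open_full := Hopen_full; tg_open_inter := Hopen_inter;
  tg_open_union := Hopen_union; tg_mul_cont := Hmul_cont; tg_inv_cont := Hinv_cont |}.

Definition ucont (e : circle -> circle) := forall eps, eps > 0 -> exists d, d > 0 /\
  forall x y, cnear x y d -> cnear (e x) (e y) eps.
Definition chom (e : circle -> circle) := forall x y, e (circle_add x y) = circle_add (e x) (e y).

Lemma fin_combine (P : Z -> R -> Prop) :
  (forall j, exists d, d > 0 /\ forall s, Rabs s < d -> P j s) ->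
  forall J, exists d, d > 0 /\ forall s, Rabs s < d -> forall j, In j J -> P j s.
Proof.
  intros HP J. induction J as [|j J IH].
  - exists 1. split; [lra|]. intros s _ j [].
  - destruct IH as [d1 [Hd1 H1]]. destruct (HP j) as [d2 [Hd2 H2]].
    exists (Rmin d1 d2). split. apply Rmin_pos; auto.
    intros s Hs k [<-|Hk].
    + apply H2. eapply Rlt_le_trans; [exact Hs| apply Rmin_r].
    + apply H1; auto. eapply Rlt_le_trans; [exact Hs| apply Rmin_l].
Qed.

Lemma embed_H (psi : Z -> circle -> circle) :
  (forall x, psi 0%Z x = x) -> (forall j, chom (psi j)) -> (forall j, ucont (psi j)) ->
  top_embedding circle_add circle_open HG (fun x => (fun j => psi j x, 0%Z) : Hc).
Proof.
  intros H0 Hh Hu. split; [|split; [|split]].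
  - intros x y. simpl. unfold Hmul; simpl. f_equal.
    apply functional_extensionality; intro j. rewrite Z.add_0_r. apply Hh.
  - intros x y E. apply (f_equal (fun h : Hc => fst h 0%Z)) in E. simpl in E.
    rewrite !H0 in E. exact E.
  - intros V HV. simpl in HV. apply circle_open_iff. intros r Vr.
    destruct (HV _ Vr) as [J [e [He H]]].
    destruct (fin_combine (fun j s => cnear (psi j (circle_proj (r + s))) (psi j (circle_proj r)) e))
      with (J := J) as [d [Hd Hc']].
    { intros j. destruct (Hu j e He) as [d [Hd Hd']]. exists d. split; auto.
      intros s Hs. apply Hd'. unfold cnear.
      apply near_zeq with (r + s - r). apply zeq_add. apply zeq_sym, val_proj.
      apply zeq_opp, zeq_sym, val_proj.
      exists 0%Z. simpl. replace (r + s - r - 0) with s by ring. exact Hs. }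
    exists d. split; auto. intros s Hs. replace s with (r + (s - r)) by ring.
    apply H. reflexivity. intros j Hj. simpl. apply Hc'; auto.
  - intros U HU. exists (fun h : Hc => U (fst h 0%Z)). split.
    + simpl. intros [f a] Uh. simpl in Uh.
      destruct (proj_surj (f 0%Z)) as [r Er]. rewrite Er in Uh.
      destruct (copen_near U HU r Uh) as [d [Hd H]].
      exists (0%Z :: nil), d. split; auto. intros [f' a'] _ Hn. simpl.
      rewrite <- (proj_val (f' 0%Z)). apply H.
      specialize (Hn 0%Z (or_introl eq_refl)). simpl in Hn. unfold cnear in Hn.
      rewrite Er in Hn. eapply near_zeq; [| exact Hn].
      apply zeq_add. apply zeq_refl. apply zeq_opp, val_proj.
    + intros x. simpl. rewrite H0. tauto.
Qed.

Definition psi (e1 e2 : circle -> circle) (j : Z) (x : circle) : circle :=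
  if Z.leb 0 j then Nat.iter (Z.to_nat j) e1 x else Nat.iter (Z.to_nat (- j)) e2 x.

Lemma iter_hom (e : circle -> circle) n : chom e -> chom (Nat.iter n e).
Proof. intros He x y. induction n; simpl; auto. rewrite IHn; apply He. Qed.
Lemma iter_ucont (e : circle -> circle) n : ucont e -> ucont (Nat.iter n e).
Proof.
  intros He. induction n; simpl.
  - intros eps Heps. exists eps; split; auto.
  - intros eps Heps. destruct (He eps Heps) as [d [Hd H]]. destruct (IHn d Hd) as [d' [Hd' H']].
    exists d'. split; [exact Hd'|]. intros x y Hxy. apply H. apply H'. exact Hxy.
Qed.

Lemma psi_shift e1 e2 g1 g2 : e1 g1 = g2 -> e2 g2 = g1 ->
  forall j, psi e1 e2 (j + 1) g1 = psi e1 e2 j g2.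
Proof.
  intros E1 E2 j. unfold psi. destruct (Z.leb_spec 0 j).
  - destruct (Z.leb_spec 0 (j + 1)); [|lia].
    replace (Z.to_nat (j + 1)) with (S (Z.to_nat j)) by lia.
    rewrite Nat.iter_succ_r, E1. reflexivity.
  - destruct (Z.eq_dec j (-1)) as [->|Hj].
    + simpl. rewrite E2. reflexivity.
    + destruct (Z.leb_spec 0 (j + 1)); [lia|].
      replace (Z.to_nat (- j)) with (S (Z.to_nat (- (j + 1)))) by lia.
      rewrite Nat.iter_succ_r, E2. reflexivity.
Qed.

Lemma if_dir (e1 e2 : circle -> circle) g1 g2 :
  chom e1 -> chom e2 -> ucont e1 -> ucont e2 -> e1 g1 = g2 -> e2 g2 = g1 ->
  induced_conjugated circle_add circle_open g1 g2.
Proof.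
  intros h1 h2 u1 u2 E1 E2.
  exists HG, (fun x => (fun j => psi e1 e2 j x, 0%Z) : Hc). split.
  - apply embed_H.
    + intros x; reflexivity.
    + intros j. unfold psi. destruct (Z.leb 0 j); apply iter_hom; auto.
    + intros j x. unfold psi. destruct (Z.leb 0 j); apply iter_ucont; auto.
  - exists ((fun _ => circle_zero), 1%Z). simpl. unfold Hmul, Hinv; simpl. f_equal.
    apply functional_extensionality; intro j. rewrite copp_0, cadd_0_r, cadd_0_l.
    apply psi_shift; auto.
Qed.

Lemma nmul_hom k : chom (circle_nmul k).
Proof. intros x y; apply nmul_add. Qed.
Lemma nmul_ucont k : ucont (circle_nmul k).
Proof.
  intros eps Heps. exists (eps / (INR k + 1)). pose proof (pos_INR k) as Hk.
  split. apply Rdiv_lt_0_compat; lra.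
  intros x y H. csurj. unfold cnear in *. rewrite !nmul_proj.
  assert (H1 : near (r0 - r) (eps / (INR k + 1))).
  { eapply near_zeq; [| exact H]. apply zeq_add. apply val_proj. apply zeq_opp, val_proj. }
  apply (near_nat k) in H1; [| apply Rdiv_lt_0_compat; lra].
  replace ((INR k + 1) * (eps / (INR k + 1))) with eps in H1 by (field; lra).
  eapply near_zeq; [| exact H1]. apply zeq_sym.
  apply zeq_trans with (INR k * r0 - INR k * r).
  apply zeq_add. apply val_proj. apply zeq_opp, val_proj. exists 0%Z; simpl; ring.
Qed.
Lemma opp_hom : chom circle_opp.
Proof. intros x y; apply copp_add. Qed.
Lemma opp_ucont : ucont circle_opp.
Proof. intros eps Heps. exists eps. split; auto. intros; apply cnear_opp; auto. Qed.
Lemma copp_opp x : circle_opp (circle_opp x) = x.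
Proof. csurj. rewrite !opp_proj. f_equal; ring. Qed.

Lemma nmul_zero_iff n a : circle_nmul n (circle_proj a) = circle_zero <-> zeq (INR n * a) 0.
Proof. rewrite nmul_proj. unfold circle_zero. apply proj_eq. Qed.

Lemma order_val g n : circle_order g n -> exists p : Z,
  IZR (Z.of_nat n) * proj1_sig g = IZR p /\ Z.gcd p (Z.of_nat n) = 1%Z.
Proof.
  intros [Hn [Hz Hmin]]. destruct g as [a Ha]. simpl.
  rewrite <- (proj_val (exist _ a Ha)) in Hz, Hmin. simpl proj1_sig in Hz, Hmin.
  apply nmul_zero_iff in Hz. destruct Hz as [p Hp]. rewrite Rminus_0_r in Hp.
  exists p. rewrite <- INR_IZR_INZ. split; auto.
  set (N := Z.of_nat n). set (d := Z.gcd p N).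
  assert (HN : (0 < N)%Z) by (unfold N; lia).
  assert (Hd0 : (0 <= d)%Z) by apply Z.gcd_nonneg.
  destruct (Z.gcd_divide_l p N) as [p' Ep]. destruct (Z.gcd_divide_r p N) as [N' EN].
  fold d in Ep, EN.
  assert (Hd : d <> 0%Z) by (intro E; rewrite E in EN; lia).
  destruct (Z.eq_dec d 1) as [E|Hne]; auto. exfalso.
  assert (HN' : (0 < N' < N)%Z) by nia.
  apply (Hmin (Z.to_nat N')). lia.
  apply nmul_zero_iff. exists p'.
  rewrite INR_IZR_INZ, Z2Nat.id by lia.
  apply Rmult_eq_reg_l with (IZR d); [| apply not_0_IZR; auto].
  replace (IZR d * (IZR N' * a - 0)) with (IZR (N' * d) * a) by (rewrite mult_IZR; ring).
  rewrite <- EN. unfold N. rewrite <- INR_IZR_INZ, Hp, Ep, mult_IZR. ring.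
Qed.

Lemma same_order g1 g2 n : circle_order g1 n -> circle_order g2 n ->
  exists k, circle_nmul k g1 = g2.
Proof.
  intros H1 H2. pose proof (proj1 H1) as Hn.
  destruct (order_val _ _ H1) as [p [Hp Gp]]. destruct (order_val _ _ H2) as [q [Hq _]].
  set (N := Z.of_nat n) in *.
  assert (HN : (0 < N)%Z) by (unfold N; lia).
  pose proof (Zgcd_is_gcd p N) as G. rewrite Gp in G. destruct (Zis_gcd_bezout _ _ _ G) as [u v Huv].
  set (k := ((u * q) mod N)%Z). set (w := ((u * q) / N)%Z).
  assert (Ek : (u * q = N * w + k)%Z) by (apply Z.div_mod; lia).
  assert (Hk : (0 <= k)%Z) by (apply Z.mod_pos_bound; lia).
  exists (Z.to_nat k).
  rewrite <- (proj_val g1), <- (proj_val g2), nmul_proj. apply proj_eq.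
  exists (- (q * v) - w * p)%Z.
  rewrite INR_IZR_INZ, Z2Nat.id by lia.
  apply Rmult_eq_reg_l with (IZR N); [| apply not_0_IZR; lia].
  replace (IZR N * (IZR k * proj1_sig g1 - proj1_sig g2))
    with (IZR k * (IZR N * proj1_sig g1) - IZR N * proj1_sig g2) by ring.
  rewrite Hp, Hq, <- !mult_IZR, <- minus_IZR. apply f_equal. assert (Hq2 : (q * (u * p + v * N) = q)%Z) by (rewrite Huv; ring). nia.
Qed.

Lemma if_full g1 g2 :
  ((exists n : nat, circle_order g1 n /\ circle_order g2 n) \/ (g1 = g2 \/ g1 = circle_opp g2)) ->
  induced_conjugated circle_add circle_open g1 g2.
Proof.
  intros [[n [H1 H2]] | [E | E]].
  - destruct (same_order _ _ _ H1 H2) as [k Hk]. destruct (same_order _ _ _ H2 H1) as [l Hl].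
    apply (if_dir (circle_nmul k) (circle_nmul l)); auto using nmul_hom, nmul_ucont.
  - subst g2. apply (if_dir (circle_nmul 1) (circle_nmul 1)); auto using nmul_hom, nmul_ucont;
    simpl; apply cadd_0_r.
  - apply (if_dir circle_opp circle_opp); auto using opp_hom, opp_ucont.
    rewrite E; apply copp_opp.
Qed.

Section TG.
Variable H : TopGroup.
Notation "x * y" := (tg_mul H x y).
Notation "1" := (tg_one H).
Notation "x ^-1" := (tg_inv H x) (at level 3).

Lemma tg_cancel_l t x y : t * x = t * y -> x = y.
Proof.
  intros E. rewrite <- (tg_mul1l H x), <- (tg_mul1l H y), <- (tg_mulVl H t), <- !tg_assoc, E.
  reflexivity.
Qed.
Lemma tg_cancel_r t x y : x * t = y * t -> x = y.
Proof.
  intros E. rewrite <- (tg_mul1r H x), <- (tg_mul1r H y), <- (tg_mulVr H t), !tg_assoc, E.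
  reflexivity.
Qed.
Lemma tg_idem x : x * x = x -> x = 1.
Proof. intros E. apply (tg_cancel_l x). rewrite tg_mul1r; auto. Qed.
Lemma tg_invinv x : (x ^-1) ^-1 = x.
Proof. apply (tg_cancel_l (x ^-1)). rewrite tg_mulVr, tg_mulVl. reflexivity. Qed.

Definition conj (t x : H) : H := t * x * t ^-1.
Lemma conj_mul t x y : conj t (x * y) = conj t x * conj t y.
Proof.
  unfold conj. rewrite <- (tg_assoc H (t * x) (t ^-1) (t * y * t ^-1)).
  rewrite (tg_assoc H (t ^-1) (t * y) (t ^-1)), (tg_assoc H (t ^-1) t y), tg_mulVl, tg_mul1l.
  rewrite (tg_assoc H (t * x) y (t ^-1)), <- (tg_assoc H t x y). reflexivity.
Qed.
Lemma conj_one t : conj t 1 = 1.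
Proof. unfold conj. rewrite tg_mul1r, tg_mulVr. reflexivity. Qed.
Lemma conj_inj t x y : conj t x = conj t y -> x = y.
Proof. unfold conj. intros E. apply tg_cancel_r in E. apply tg_cancel_l in E. exact E. Qed.
Lemma conj_inv t x : conj (t ^-1) (conj t x) = x.
Proof.
  unfold conj. rewrite tg_invinv. rewrite !tg_assoc, tg_mulVl, tg_mul1l.
  rewrite <- !tg_assoc, tg_mulVl, tg_mul1r. reflexivity.
Qed.

Fixpoint hpow (n : nat) (x : H) : H := match n with O => 1 | S m => x * hpow m x end.
Lemma conj_pow t n x : conj t (hpow n x) = hpow n (conj t x).
Proof. induction n; simpl. apply conj_one. rewrite conj_mul, IHn; reflexivity. Qed.

Lemma open_ext (P Q : H -> Prop) : (forall x, P x <-> Q x) -> tg_open H P -> tg_open H Q.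
Proof.
  intros E HP. replace Q with P; auto.
  apply functional_extensionality; intro x. apply propositional_extensionality; auto.
Qed.

Lemma open_pre_l W t : tg_open H W -> tg_open H (fun x => W (t * x)).
Proof.
  intros HW.
  apply open_ext with (fun x => exists U, (tg_open H U /\ forall a, U a -> W (t * a)) /\ U x).
  - intros x. split.
    + intros [U [[_ HU] Ux]]. auto.
    + intros Wx. destruct (tg_mul_cont H W t x HW Wx) as [U1 [V1 [_ [HV1 [Ut [Vx Hp]]]]]].
      exists V1. split; auto.
  - apply tg_open_union. intros U [HU _]; auto.
Qed.
Lemma open_pre_r W t : tg_open H W -> tg_open H (fun x => W (x * t)).
Proof.
  intros HW.
  apply open_ext with (fun x => exists U, (tg_open H U /\ forall a, U a -> W (a * t)) /\ U x).
  - intros x. split.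
    + intros [U [[_ HU] Ux]]. auto.
    + intros Wx. destruct (tg_mul_cont H W x t HW Wx) as [U1 [V1 [HU1 [_ [Ux [Vt Hp]]]]]].
      exists U1. split; auto.
  - apply tg_open_union. intros U [HU _]; auto.
Qed.
Lemma open_pre_conj W t : tg_open H W -> tg_open H (fun x => W (conj t x)).
Proof.
  intros HW. unfold conj.
  apply open_ext with (fun x => (fun y => W (y * t ^-1)) (t * x)); [tauto|].
  apply (open_pre_l (fun y => W (y * t ^-1)) t). apply open_pre_r; auto.
Qed.

Variable i : circle -> H.
Hypothesis Hi : top_embedding circle_add circle_open H i.

Lemma i_zero : i circle_zero = 1.
Proof. apply tg_idem. rewrite <- (proj1 Hi). rewrite cadd_0_l. reflexivity. Qed.
Lemma i_nmul n x : i (circle_nmul n x) = hpow n (i x).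
Proof. induction n; simpl. apply i_zero. rewrite (proj1 Hi), IHn. reflexivity. Qed.

Lemma conj_nmul t g1 g2 : conj t (i g1) = i g2 ->
  forall n, i (circle_nmul n g2) = conj t (i (circle_nmul n g1)).
Proof. intros E n. rewrite !i_nmul, conj_pow, E. reflexivity. Qed.

Lemma conj_order t g1 g2 : conj t (i g1) = i g2 ->
  forall n, circle_nmul n g1 = circle_zero <-> circle_nmul n g2 = circle_zero.
Proof.
  intros E n. pose proof (conj_nmul t g1 g2 E n) as C. split; intros Z.
  - apply (proj1 (proj2 Hi)). rewrite C, Z, i_zero, conj_one. reflexivity.
  - apply (proj1 (proj2 Hi)). apply (conj_inj t). rewrite <- C, Z, i_zero, conj_one. reflexivity.
Qed.

Lemma extract t g1 g2 : conj t (i g1) = i g2 ->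
  forall e, e > 0 -> exists d, d > 0 /\ forall n : nat,
    near (Rmult (INR n) (proj1_sig g1)) d -> near (Rmult (INR n) (proj1_sig g2)) e.
Proof.
  intros E e He.
  set (W := fun c : circle => near (proj1_sig c) e).
  assert (HW : circle_open W).
  { apply circle_open_iff. intros r Wr. unfold W in Wr.
    apply near_zeq with (s := r) in Wr; [| apply val_proj]. destruct Wr as [z Hz].
    exists (e - Rabs (r - IZR z)). split; [lra|]. intros s Hs. unfold W.
    apply near_zeq with s; [apply zeq_sym, val_proj|]. exists z.
    replace (s - IZR z) with ((s - r) + (r - IZR z)) by ring.
    eapply Rle_lt_trans; [apply Rabs_triang|]. lra. }
  destruct (proj2 (proj2 (proj2 Hi)) W HW) as [V [HV EV]].
  pose proof (proj1 (proj2 (proj2 Hi)) _ (open_pre_conj V t HV)) as HU.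
  simpl in HU.
  assert (U0 : V (conj t (i (circle_proj 0)))).
  { fold circle_zero. rewrite i_zero, conj_one, <- i_zero. apply EV. unfold W.
    apply near_zeq with 0; [apply zeq_sym, val_proj| apply near_0; auto]. }
  destruct (copen_near _ HU 0 U0) as [d [Hd Hn]]. exists d. split; auto.
  intros n Hnear.
  specialize (Hn (Rmult (INR n) (proj1_sig g1))). rewrite Rminus_0_r in Hn. specialize (Hn Hnear). rewrite <- nmul_proj, proj_val in Hn.
  rewrite <- (conj_nmul t g1 g2 E n) in Hn. apply EV in Hn. unfold W in Hn.
  apply near_zeq with (proj1_sig (circle_nmul n g2)); auto.
  rewrite <- (proj_val g2) at 1. rewrite nmul_proj. apply val_proj.
Qed.
End TG.

Definition irr (a : R) := forall m : Z, m <> 0%Z -> forall z : Z, IZR m * a <> IZR z.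
Definition PZ (a b : R) := forall e, e > 0 -> exists d, d > 0 /\
  forall n : Z, near (IZR n * a) d -> near (IZR n * b) e.

Lemma pigeon N : forall (f : nat -> nat), (forall j, (j <= N)%nat -> (f j < N)%nat) ->
  exists i j, (i < j <= N)%nat /\ f i = f j.
Proof.
  induction N as [|N IH]; intros f Hf.
  - specialize (Hf 0%nat (le_n 0)). lia.
  - destruct (classic (exists j, (j <= N)%nat /\ f j = f (S N))) as [[j [Hj E]]|Hno].
    { exists j, (S N). split; [lia|auto]. }
    destruct (classic (exists j, (j <= N)%nat /\ f j = N)) as [[j0 [Hj0 E0]]|Hno2].
    + assert (HfS : (f (S N) < N)%nat).
      { pose proof (Hf (S N) (le_n _)). destruct (Nat.eq_dec (f (S N)) N); [|lia].
        exfalso; apply Hno; exists j0; split; auto; congruence. }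
      set (g := fun j => if Nat.eq_dec (f j) N then f (S N) else f j).
      destruct (IH g) as [i [j [Hij E]]].
      { intros j Hj. unfold g. destruct (Nat.eq_dec (f j) N); auto.
        pose proof (Hf j ltac:(lia)). lia. }
      unfold g in E. destruct (Nat.eq_dec (f i) N), (Nat.eq_dec (f j) N).
      * exists i, j. split; [lia|congruence].
      * exfalso; apply Hno. exists j. split; [lia|congruence].
      * exfalso; apply Hno. exists i. split; [lia|congruence].
      * exists i, j. split; [lia|auto].
    + destruct (IH f) as [i [j [Hij E]]].
      { intros j Hj. pose proof (Hf j ltac:(lia)).
        destruct (Nat.eq_dec (f j) N); [exfalso; apply Hno2; exists j; auto | lia]. }
      exists i, j. split; [lia|auto].
Qed.

Lemma Int_part_bounds r : IZR (Int_part r) <= r < IZR (Int_part r) + 1.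
Proof. destruct (base_Int_part r). lra. Qed.

Lemma dens a : irr a -> forall eta, eta > 0 -> exists m z : Z, 0 < IZR m * a - IZR z < eta.
Proof.
  intros Ha eta Heta.
  set (N := Z.to_nat (up (1 / eta))).
  destruct (archimed (1 / eta)) as [Hu _].
  assert (Hpos : 0 < 1 / eta) by (apply Rdiv_lt_0_compat; lra).
  assert (HupZ : (0 < up (1 / eta))%Z) by (apply lt_IZR; simpl; lra).
  assert (HN : INR N = IZR (up (1 / eta))) by (unfold N; rewrite INR_IZR_INZ, Z2Nat.id by lia; reflexivity).
  assert (HN1 : 1 <= INR N) by (rewrite HN; apply IZR_le; lia).
  set (f := fun j : nat => Z.to_nat (Int_part (INR N * frac_part (INR j * a)))).
  assert (Hfr : forall r, 0 <= frac_part r < 1).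
  { intros r. unfold frac_part. pose proof (Int_part_bounds r). lra. }
  assert (Hip : forall r, 0 <= r -> (0 <= Int_part r)%Z).
  { intros r Hr. pose proof (Int_part_bounds r). assert (-1 < Int_part r)%Z; [|lia].
    apply lt_IZR. simpl. lra. }
  destruct (pigeon N f) as [i [j [Hij E]]].
  { intros j Hj. unfold f. pose proof (Hfr (INR j * a)).
    pose proof (Int_part_bounds (INR N * frac_part (INR j * a))).
    assert (Int_part (INR N * frac_part (INR j * a)) < Z.of_nat N)%Z.
    { apply lt_IZR. rewrite <- INR_IZR_INZ. nra. }
    assert (0 <= Int_part (INR N * frac_part (INR j * a)))%Z by (apply Hip; nra).
    lia. }
  unfold f in E. set (u := frac_part (INR i * a)) in *. set (v := frac_part (INR j * a)) in *.
  pose proof (Hfr (INR i * a)) as Hu'. pose proof (Hfr (INR j * a)) as Hv'. fold u v in Hu', Hv'.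
  apply Z2Nat.inj in E; [| apply Hip; nra | apply Hip; nra].
  pose proof (Int_part_bounds (INR N * u)) as B1. pose proof (Int_part_bounds (INR N * v)) as B2.
  rewrite E in B1.
  assert (Hd : Rabs (v - u) < eta).
  { assert (Rabs (INR N * v - INR N * u) < 1) by (apply Rabs_def1; lra).
    replace (INR N * v - INR N * u) with (INR N * (v - u)) in H by ring.
    rewrite Rabs_mult, Rabs_pos_eq in H by lra.
    assert (1 / eta < INR N) by lra.
    apply Rmult_lt_reg_l with (INR N); [lra|].
    apply Rlt_trans with 1; auto.
    apply Rmult_lt_reg_l with (1 / eta); [lra|].
    replace (1 / eta * (INR N * eta)) with (INR N) by (field; lra). lra. }
  set (m := (Z.of_nat j - Z.of_nat i)%Z).
  set (z := (Int_part (INR j * a) - Int_part (INR i * a))%Z).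
  assert (Evu : v - u = IZR m * a - IZR z).
  { unfold v, u, frac_part, m, z. rewrite !minus_IZR, <- !INR_IZR_INZ. ring. }
  assert (Hm : m <> 0%Z) by (unfold m; lia).
  destruct (Rtotal_order (v - u) 0) as [Hlt|[Heq|Hgt]].
  - exists (- m)%Z, (- z)%Z. rewrite !opp_IZR.
    rewrite Rabs_left in Hd by lra. lra.
  - exfalso. apply (Ha m Hm z). lra.
  - exists m, z. rewrite Rabs_right in Hd by lra. lra.
Qed.

Lemma cover a : irr a -> forall x eta, eta > 0 ->
  exists m z : Z, Rabs (IZR m * a - IZR z - x) < eta.
Proof.
  intros Ha x eta Heta. destruct (dens a Ha eta Heta) as [m0 [z0 [H1 H2]]].
  set (d := IZR m0 * a - IZR z0) in *.
  set (q := Int_part (x / d)). pose proof (Int_part_bounds (x / d)) as B. fold q in B.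
  exists (q * m0)%Z, (q * z0)%Z. rewrite !mult_IZR.
  replace (IZR q * IZR m0 * a - IZR q * IZR z0) with (IZR q * d) by (unfold d; ring).
  assert (IZR q * d <= x < IZR q * d + d).
  { split.
    - apply Rmult_le_reg_r with (/ d). apply Rinv_0_lt_compat; lra.
      replace (IZR q * d * / d) with (IZR q) by (field; lra). unfold Rdiv in B. lra.
    - apply Rmult_lt_reg_r with (/ d). apply Rinv_0_lt_compat; lra.
      replace ((IZR q * d + d) * / d) with (IZR q + 1) by (field; lra). unfold Rdiv in B. lra. }
  apply Rabs_def1; lra.
Qed.

Lemma int_small (z : Z) : Rabs (IZR z) < 1 -> z = 0%Z.
Proof.
  intros H. apply Rabs_def2 in H. destruct H.
  assert (-1 < z < 1)%Z by (split; apply lt_IZR; simpl; lra). lia.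
Qed.

Lemma zeq_small_eq y y' : zeq y y' -> Rabs y < 1/2 -> Rabs y' < 1/2 -> y = y'.
Proof.
  intros [z Hz] H1 H2. assert (z = 0%Z).
  { apply int_small. rewrite <- Hz. apply Rabs_def2 in H1. apply Rabs_def2 in H2.
    apply Rabs_def1; lra. }
  subst z. simpl in Hz. lra.
Qed.

Lemma Int_part_nonneg r : 0 <= r -> (0 <= Int_part r)%Z.
Proof. intros Hr. pose proof (Int_part_bounds r). assert (-1 < Int_part r)%Z; [|lia].
  apply lt_IZR. simpl. lra. Qed.

Lemma near_of_zeq x r e : zeq x r -> Rabs x < e -> near r e.
Proof. intros [z Hz] H. exists (- z)%Z. rewrite opp_IZR.
  replace (r - - IZR z) with x by lra. exact H. Qed.

Lemma absmul p q A B : Rabs p <= A -> Rabs q <= B -> Rabs (p * q) <= A * B.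
Proof. intros H1 H2. rewrite Rabs_mult. apply Rmult_le_compat; auto using Rabs_pos. Qed.

Lemma abs4 p q r s : Rabs (p + q - r - s) <= Rabs p + Rabs q + Rabs r + Rabs s.
Proof. unfold Rabs; repeat destruct Rcase_abs; lra. Qed.

Lemma small0 r : (forall e, 0 < e -> e <= 1/8 -> Rabs r < e) -> r = 0.
Proof.
  intros H. destruct (Req_dec r 0) as [E|Hne]; auto. exfalso.
  pose proof (Rabs_pos_lt r Hne).
  specialize (H (Rmin (Rabs r) (1/8))). pose proof (Rmin_l (Rabs r) (1/8)).
  assert (Rabs r < Rmin (Rabs r) (1 / 8)). apply H. apply Rmin_pos; lra. apply Rmin_r. lra.
Qed.

Section Core.
Variables a b D : R.
Hypothesis Ha : irr a.
Hypothesis HP : PZ a b.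
Hypothesis HD : 0 < D <= 1/4.
Hypothesis HPD : forall n : Z, near (IZR n * a) D -> near (IZR n * b) (1/8).

Definition good n x y := zeq x (IZR n * a) /\ Rabs x < D /\ zeq y (IZR n * b) /\ Rabs y < 1/8.

Lemma good_ex n x : zeq x (IZR n * a) -> Rabs x < D -> exists y, good n x y.
Proof.
  intros Hz Hx. destruct (HPD n (near_of_zeq _ _ _ Hz Hx)) as [w Hw].
  exists (IZR n * b - IZR w). repeat split; auto. exists (- w)%Z. rewrite opp_IZR; ring.
Qed.

Lemma good_unique n x y y' : good n x y -> good n x y' -> y = y'.
Proof.
  intros (_ & _ & H1 & H2) (_ & _ & H3 & H4). apply zeq_small_eq; try lra.
  apply zeq_trans with (IZR n * b); auto. apply zeq_sym; auto.
Qed.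

Lemma good_add n x y m x' y' : good n x y -> good m x' y' -> Rabs (x + x') < D ->
  good (n + m) (x + x') (y + y').
Proof.
  intros (H1 & H2 & H3 & H4) (H1' & H2' & H3' & H4') Hs.
  assert (Za : zeq (x + x') (IZR (n + m) * a)).
  { rewrite plus_IZR. replace ((IZR n + IZR m) * a) with (IZR n * a + IZR m * a) by ring.
    apply zeq_add; auto. }
  destruct (good_ex _ _ Za Hs) as [y'' Hy''].
  assert (E : y + y' = y'').
  { apply zeq_small_eq.
    - apply zeq_trans with (IZR (n + m) * b). rewrite plus_IZR.
      replace ((IZR n + IZR m) * b) with (IZR n * b + IZR m * b) by ring. apply zeq_add; auto.
      apply zeq_sym, Hy''.
    - apply Rabs_def2 in H4. apply Rabs_def2 in H4'. apply Rabs_def1; lra.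
    - destruct Hy'' as (_ & _ & _ & Hb). lra. }
  rewrite E. exact Hy''.
Qed.

Lemma good_neg n x y : good n x y -> good (- n) (- x) (- y).
Proof.
  intros (H1 & H2 & H3 & H4). unfold good. rewrite opp_IZR. repeat split.
  - replace (- IZR n * a) with (- (IZR n * a)) by ring. apply zeq_opp; auto.
  - rewrite Rabs_Ropp; auto.
  - replace (- IZR n * b) with (- (IZR n * b)) by ring. apply zeq_opp; auto.
  - rewrite Rabs_Ropp; auto.
Qed.

Lemma good_iter m t u : good m t u -> 0 <= t -> forall j : nat, INR j * t < D ->
  good (Z.of_nat j * m) (INR j * t) (INR j * u).
Proof.
  intros Hg Ht j. induction j as [|j IH]; intros Hj.
  - simpl. repeat split; try (rewrite Rmult_0_l, Rabs_R0; lra); exists 0%Z; simpl; ring.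
  - rewrite S_INR in Hj |- *. pose proof (pos_INR j).
    assert (IH' := IH ltac:(nra)).
    assert (G := good_add _ _ _ _ _ _ IH' Hg ltac:(rewrite Rabs_pos_eq by nra; nra)).
    replace (Z.of_nat (S j) * m)%Z with (Z.of_nat j * m + m)%Z by (rewrite Nat2Z.inj_succ; ring).
    replace ((INR j + 1) * t) with (INR j * t + t) by ring.
    replace ((INR j + 1) * u) with (INR j * u + u) by ring. exact G.
Qed.

Lemma good_decomp m t u n x y : good m t u -> 0 < t -> t < D / 2 ->
  good n x y -> 0 <= x < D / 2 ->
  exists (j : nat) e ye, 0 <= e < t /\ x = INR j * t + e /\
    good (n - Z.of_nat j * m) e ye /\ y = INR j * u + ye /\ Rabs (INR j * u) < 1/8.
Proof.
  intros Hm Ht Ht2 Hn Hx.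
  set (q := Int_part (x / t)). pose proof (Int_part_bounds (x / t)) as B. fold q in B.
  assert (Hq : (0 <= q)%Z) by (apply Int_part_nonneg; unfold Rdiv; apply Rmult_le_pos; [lra| left; apply Rinv_0_lt_compat; lra]).
  set (j := Z.to_nat q).
  assert (Hj : INR j = IZR q) by (unfold j; rewrite INR_IZR_INZ, Z2Nat.id by lia; reflexivity).
  assert (Bj : INR j * t <= x < INR j * t + t).
  { rewrite Hj. split.
    - apply Rmult_le_reg_r with (/ t). apply Rinv_0_lt_compat; lra.
      replace (IZR q * t * / t) with (IZR q) by (field; lra). unfold Rdiv in B. lra.
    - apply Rmult_lt_reg_r with (/ t). apply Rinv_0_lt_compat; lra.
      replace ((IZR q * t + t) * / t) with (IZR q + 1) by (field; lra). unfold Rdiv in B. lra. }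
  assert (Gj := good_iter m t u Hm ltac:(lra) j ltac:(lra)).
  set (e := x - INR j * t).
  assert (Ze : zeq e (IZR (n - Z.of_nat j * m) * a)).
  { unfold e. rewrite minus_IZR, mult_IZR, <- INR_IZR_INZ.
    replace ((IZR n - INR j * IZR m) * a) with (IZR n * a + - (IZR (Z.of_nat j * m) * a))
      by (rewrite mult_IZR, <- INR_IZR_INZ; ring).
    apply zeq_add. apply Hn. apply zeq_opp. apply Gj. }
  assert (He : Rabs e < D) by (unfold e; rewrite Rabs_pos_eq; lra).
  destruct (good_ex _ _ Ze He) as [ye Hye].
  assert (G := good_add _ _ _ _ _ _ Gj Hye ltac:(unfold e; rewrite Rabs_pos_eq; lra)).
  replace (Z.of_nat j * m + (n - Z.of_nat j * m))%Z with n in G by ring.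
  replace (INR j * t + e) with x in G by (unfold e; ring).
  exists j, e, ye. split; [unfold e; lra|]. split; [unfold e; ring|]. split; auto.
  split. apply (good_unique n x); auto. destruct Gj as (_ & _ & _ & Hb); auto.
Qed.

Section Ref.
Variables m0 : Z.
Variables x0 y0 : R.
Hypothesis Hg0 : good m0 x0 y0.
Hypothesis Hx0 : 0 < x0 < D / 2.

Lemma lin_pos n x y : good n x y -> 0 <= x < D / 2 -> y * x0 = y0 * x.
Proof.
  intros Hn Hx. apply Rminus_diag_uniq. apply small0. intros eps Heps Heps8.
  destruct (HP eps Heps) as [d1 [Hd1 Hd1']].
  set (eta := Rmin (Rmin d1 eps) (D / 2)).
  assert (Heta : 0 < eta) by (apply Rmin_pos; [apply Rmin_pos|]; lra).
  assert (E1 : eta <= d1) by (unfold eta; eapply Rle_trans; [apply Rmin_l| apply Rmin_l]).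
  assert (E2 : eta <= eps) by (unfold eta; eapply Rle_trans; [apply Rmin_l| apply Rmin_r]).
  assert (E3 : eta <= D / 2) by apply Rmin_r.
  destruct (dens a Ha eta Heta) as [m [z [Ht1 Ht2]]].
  set (t := IZR m * a - IZR z) in *.
  assert (Zt : zeq t (IZR m * a)) by (exists (- z)%Z; rewrite opp_IZR; unfold t; ring).
  destruct (good_ex m t Zt ltac:(rewrite Rabs_pos_eq; lra)) as [u Hu].
  assert (Small : forall k e ye, 0 <= e < t -> good k e ye -> Rabs ye < eps).
  { intros k e ye He (Z1 & _ & Z2 & Hye).
    destruct (Hd1' k (near_of_zeq e (IZR k * a) d1 Z1 ltac:(rewrite Rabs_pos_eq; lra))) as [w Hw].
    replace ye with (IZR k * b - IZR w); auto. apply zeq_small_eq; try lra.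
    apply zeq_trans with (IZR k * b). exists (- w)%Z; rewrite opp_IZR; ring. apply zeq_sym; auto. }
  destruct (good_decomp m t u n x y Hu Ht1 ltac:(lra) Hn Hx) as (j & e & ye & He & Ex & Ge & Ey & Hju).
  destruct (good_decomp m t u m0 x0 y0 Hu Ht1 ltac:(lra) Hg0 ltac:(lra))
    as (j0 & e0 & ye0 & He0 & Ex0 & Ge0 & Ey0 & Hju0).
  pose proof (Small _ _ _ He Ge) as S1. pose proof (Small _ _ _ He0 Ge0) as S2.
  assert (Alg : y * x0 - y0 * x = (INR j * u) * e0 + ye * x0 - (INR j0 * u) * e - ye0 * x).
  { rewrite Ey, Ey0, Ex, Ex0. ring. }
  rewrite Alg. eapply Rle_lt_trans; [apply abs4|].
  assert (Rabs ((INR j * u) * e0) <= 1/8 * eps) by (apply absmul; [lra| rewrite Rabs_pos_eq; lra]).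
  assert (Rabs (ye * x0) <= eps * (1/4)) by (apply absmul; [lra| rewrite Rabs_pos_eq; lra]).
  assert (Rabs ((INR j0 * u) * e) <= 1/8 * eps) by (apply absmul; [lra| rewrite Rabs_pos_eq; lra]).
  assert (Rabs (ye0 * x) <= eps * (1/4)) by (apply absmul; [lra| rewrite Rabs_pos_eq; lra]).
  lra.
Qed.

Lemma lin n x y : good n x y -> Rabs x < D / 2 -> y * x0 = y0 * x.
Proof.
  intros Hn Hx. destruct (Rle_lt_dec 0 x).
  - apply (lin_pos n); auto. rewrite Rabs_pos_eq in Hx; lra.
  - assert (E := lin_pos _ _ _ (good_neg _ _ _ Hn) ltac:(rewrite Rabs_left in Hx; lra)). lra.
Qed.

Lemma slope_int : exists K : Z, y0 = IZR K * x0.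
Proof.
  set (L := Z.to_nat (up (4 / D))).
  destruct (archimed (4 / D)) as [Hu _].
  assert (Hpos : 0 < 4 / D) by (apply Rdiv_lt_0_compat; lra).
  assert (HupZ : (0 < up (4 / D))%Z) by (apply lt_IZR; simpl; lra).
  assert (HL : INR L = IZR (up (4 / D))) by (unfold L; rewrite INR_IZR_INZ, Z2Nat.id by lia; reflexivity).
  assert (HL1 : 4 / D < INR L) by lra.
  assert (HLpos : 0 < INR L) by lra.
  assert (HL2 : 1 / INR L < D / 4).
  { apply Rmult_lt_reg_l with (INR L); auto. replace (INR L * (1 / INR L)) with 1 by (field; lra).
    apply Rmult_lt_reg_l with (4 / D); auto.
    replace (4 / D * (INR L * (D / 4))) with (INR L) by (field; lra).
    replace (4 / D * 1) with (4 / D) by ring. lra. }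
  set (eta := D / (4 * INR L)).
  assert (Heta : 0 < eta) by (unfold eta; apply Rdiv_lt_0_compat; lra).
  assert (Heta2 : eta = (D / 4) * (1 / INR L)) by (unfold eta; field; lra).
  destruct (cover a Ha (1 / INR L) eta Heta) as [m [z Hmz]].
  set (x := IZR m * a - IZR z) in *.
  apply Rabs_def2 in Hmz.
  assert (Hx1 : 0 < x) by nra.
  assert (Hx2 : x < D / 2) by nra.
  assert (Zx : zeq x (IZR m * a)) by (exists (- z)%Z; rewrite opp_IZR; unfold x; ring).
  destruct (good_ex m x Zx ltac:(rewrite Rabs_pos_eq; lra)) as [y Hy].
  set (r := INR L * x - 1).
  assert (Zr : zeq r (IZR (Z.of_nat L * m) * a)).
  { exists (- (Z.of_nat L * z) - 1)%Z. unfold r, x. rewrite minus_IZR, opp_IZR, !mult_IZR, <- INR_IZR_INZ.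
    simpl. ring. }
  assert (Hr : Rabs r < D / 2).
  { unfold r. apply Rabs_def1.
    - assert (INR L * x - 1 = INR L * (x - 1 / INR L)) by (field; lra).
      assert (INR L * eta = D / 4) by (unfold eta; field; lra). nra.
    - assert (INR L * x - 1 = INR L * (x - 1 / INR L)) by (field; lra).
      assert (INR L * eta = D / 4) by (unfold eta; field; lra). nra. }
  destruct (good_ex _ r Zr ltac:(lra)) as [yr Hyr].
  pose proof (lin _ _ _ Hy ltac:(rewrite Rabs_pos_eq; lra)) as E1.
  pose proof (lin _ _ _ Hyr Hr) as E2.
  assert (Zy : zeq (INR L * y) yr).
  { apply zeq_trans with (IZR (Z.of_nat L * m) * b).
    - rewrite mult_IZR, <- INR_IZR_INZ, Rmult_assoc. rewrite INR_IZR_INZ. apply zeq_mulZ.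
      apply Hy.
    - apply zeq_sym, Hyr. }
  destruct Zy as [K HK]. exists K. rewrite <- HK.
  unfold r in E2. nra.
Qed.

End Ref.

Lemma core_k : exists K : Z, zeq b (IZR K * a).
Proof.
  destruct (dens a Ha (D / 2) ltac:(lra)) as [m0 [z0 [H1 H2]]].
  set (x0 := IZR m0 * a - IZR z0) in *.
  assert (Zx : zeq x0 (IZR m0 * a)) by (exists (- z0)%Z; rewrite opp_IZR; unfold x0; ring).
  destruct (good_ex m0 x0 Zx ltac:(rewrite Rabs_pos_eq; lra)) as [y0 Hy0].
  destruct (slope_int m0 x0 y0 Hy0 ltac:(lra)) as [K HK].
  assert (Gam : forall n : Z, near (IZR n * a) (D / 2) -> zeq (IZR n * b) (IZR K * (IZR n * a))).
  { intros n [w Hw]. set (x := IZR n * a - IZR w) in *.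
    assert (Zn : zeq x (IZR n * a)) by (exists (- w)%Z; rewrite opp_IZR; unfold x; ring).
    destruct (good_ex n x Zn ltac:(lra)) as [y Hy].
    pose proof (lin m0 x0 y0 Hy0 ltac:(lra) n x y Hy Hw) as E.
    rewrite HK in E. assert (Ey : y = IZR K * x).
    { apply Rmult_eq_reg_r with x0; [|lra]. rewrite E. ring. }
    apply zeq_trans with y. apply zeq_sym, Hy. rewrite Ey. unfold x.
    exists (- (K * w))%Z. rewrite opp_IZR, mult_IZR. ring. }
  assert (Hm0 : m0 <> 0%Z).
  { intros E. unfold x0 in H1, H2. rewrite E in H1, H2. simpl in H1, H2. rewrite Rmult_0_l in H1, H2.
    assert (z0 = 0%Z) by (apply int_small; apply Rabs_def1; lra). subst z0. simpl in H1. lra. }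
  destruct (Gam m0 (near_of_zeq x0 (IZR m0 * a) (D / 2) Zx ltac:(rewrite Rabs_pos_eq; lra))) as [p Hp].
  assert (Hirr : irr (IZR m0 * a)).
  { intros m Hm z E. apply (Ha (m * m0)%Z ltac:(lia) z). rewrite mult_IZR, <- E. ring. }
  destruct (cover _ Hirr (- a) (D / 2) ltac:(lra)) as [j [w Hjw]].
  assert (Nr : near (IZR (1 + j * m0) * a) (D / 2)).
  { exists w. rewrite plus_IZR, mult_IZR. simpl.
    replace ((1 + IZR j * IZR m0) * a - IZR w) with (IZR j * (IZR m0 * a) - IZR w - - a) by ring.
    exact Hjw. }
  destruct (Gam _ Nr) as [p2 Hp2].
  rewrite plus_IZR, mult_IZR in Hp2.
  exists K, (p2 - j * p)%Z. rewrite minus_IZR, mult_IZR, <- Hp, <- Hp2. ring.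
Qed.

End Core.

Lemma core a b : irr a -> PZ a b -> exists K : Z, zeq b (IZR K * a).
Proof.
  intros Ha HP. destruct (HP (1/8) ltac:(lra)) as [d0 [Hd0 H0]].
  apply (core_k a b (Rmin d0 (1/4))); auto.
  - split. apply Rmin_pos; lra. apply Rmin_r.
  - intros n Hn. apply H0. eapply near_mono; [apply Rmin_l| exact Hn].
Qed.

Lemma order_exists g : forall n, (0 < n)%nat -> circle_nmul n g = circle_zero ->
  exists m, circle_order g m.
Proof.
  intros n. induction n as [n IH] using lt_wf_ind. intros Hn Hz.
  destruct (classic (exists m, (0 < m < n)%nat /\ circle_nmul m g = circle_zero)) as [[m [Hm Hmz]]|Hno].
  - apply (IH m); lia || auto.
  - exists n. split; auto. split; auto. intros m Hm E. apply Hno. exists m; auto.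
Qed.

Lemma irr_of g : (forall n, (0 < n)%nat -> circle_nmul n g <> circle_zero) -> irr (proj1_sig g).
Proof.
  intros Hg m Hm z E. set (k := Z.to_nat (Z.abs m)).
  apply (Hg k). unfold k; lia.
  rewrite <- (proj_val g). apply nmul_zero_iff.
  unfold k. rewrite INR_IZR_INZ, Z2Nat.id by lia.
  destruct (Z_le_gt_dec 0 m).
  - rewrite Z.abs_eq by lia. exists z. rewrite E; ring.
  - rewrite Z.abs_neq by lia. exists (- z)%Z. rewrite opp_IZR, opp_IZR, <- E; ring.
Qed.

Lemma PZ_of a b : (forall e, e > 0 -> exists d, d > 0 /\ forall n : nat,
    near (Rmult (INR n) a) d -> near (Rmult (INR n) b) e) -> PZ a b.
Proof.
  intros H e He. destruct (H e He) as [d [Hd Hn]]. exists d. split; auto.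
  intros n Hnear. destruct (Z_le_gt_dec 0 n).
  - specialize (Hn (Z.to_nat n)). rewrite INR_IZR_INZ, Z2Nat.id in Hn by lia. auto.
  - specialize (Hn (Z.to_nat (- n))). rewrite INR_IZR_INZ, Z2Nat.id in Hn by lia.
    rewrite opp_IZR in Hn.
    replace (IZR n * b) with (- (- IZR n * b)) by ring. apply near_opp. apply Hn.
    replace (- IZR n * a) with (- (IZR n * a)) by ring. apply near_opp. auto.
Qed.

Theorem mainTheorem17 (g1 g2 : circle) :
  induced_conjugated circle_add circle_open g1 g2 <->
  ((exists n : nat, circle_order g1 n /\ circle_order g2 n) \/
   (g1 = g2 \/ g1 = circle_opp g2)).
Proof.
  split; [| apply if_full].
  intros [H [i [Hi [t Et]]]].
  assert (Et' : conj H t (i g1) = i g2) by exact Et.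
  pose proof (conj_order H i Hi t g1 g2 Et') as Ord.
  destruct (classic (exists n, circle_order g1 n)) as [[n Hn]|Hno].
  - left. exists n. split; auto. destruct Hn as [H0 [H1 H2]]. split; auto. split.
    + apply Ord; auto.
    + intros m Hm E. apply (H2 m Hm). apply Ord; auto.
  - right.
    assert (I1 : forall n, (0 < n)%nat -> circle_nmul n g1 <> circle_zero).
    { intros n Hn E. apply Hno. apply (order_exists g1 n); auto. }
    assert (I2 : forall n, (0 < n)%nat -> circle_nmul n g2 <> circle_zero).
    { intros n Hn E. apply (I1 n Hn). apply Ord; auto. }
    assert (Et2 : conj H (tg_inv H t) (i g2) = i g1) by (rewrite <- Et'; apply conj_inv).
    pose proof (irr_of g1 I1) as Ha. pose proof (irr_of g2 I2) as Hb.
    pose proof (PZ_of _ _ (extract H i Hi t g1 g2 Et')) as P1.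
    pose proof (PZ_of _ _ (extract H i Hi (tg_inv H t) g2 g1 Et2)) as P2.
    destruct (core _ _ Ha P1) as [K HK]. destruct (core _ _ Hb P2) as [L HL].
    set (a := proj1_sig g1) in *. set (b := proj1_sig g2) in *.
    assert (Z1 : zeq a (IZR (L * K) * a)).
    { apply zeq_trans with (IZR L * b); auto. rewrite mult_IZR, Rmult_assoc. apply zeq_mulZ; auto. }
    destruct Z1 as [z Hz].
    assert (EK : (L * K = 1)%Z).
    { destruct (Z.eq_dec (L * K) 1) as [E|E]; auto. exfalso.
      apply (Ha (1 - L * K)%Z ltac:(lia) z). rewrite minus_IZR. simpl. rewrite <- Hz. ring. }
    rewrite Z.mul_comm in EK. destruct (Z.eq_mul_1 _ _ EK) as [E|E]; rewrite E in HK.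
    + left. rewrite <- (proj_val g1), <- (proj_val g2). apply proj_eq. fold a b.
      apply zeq_sym. eapply zeq_trans; [exact HK|]. exists 0%Z; simpl; ring.
    + right. rewrite <- (proj_val g1), <- (proj_val g2), opp_proj. apply proj_eq. fold a b.
      apply zeq_trans with (- (IZR (- (1)) * a)). exists 0%Z; simpl; ring.
      apply zeq_opp, zeq_sym; auto.
Qed.
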